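(* Let $R$ be a poset and $P$ a join-semilattice with a least element. The following are equivalent: (i) there is an order-embedding of $I(R)$ into $J(P)$ which preserves arbitrary joins; (ii) there is an order-embedding of $I(R)$ into $J(P)$; (iii) there is a map $g:I_{<\omega}(R)\to P$ such that for all $X,Y_1,\dots,Y_n\in I_{<\omega}(R)$: if $X\not\subseteq Y_1\cup\dots\cup Y_n$ then $g(X)\not\le g(Y_1)\vee\dots\vee g(Y_n)$; (iv) there is a map $h:R\to P$ such that for all $x,y_1,\dots,y_n\in R$: if $x\not\le y_i$ for every $1\le i\le n$, then $h(x)\not\le h(y_1)\vee\dots\vee h(y_n)$.
   Context: $I(R)$ is the set of initial segments of $R$ ordered by inclusion; $I_{<\omega}(R)$ is the set of finitely generated initial segments of $R$, i.e. those of the form $\downarrow A=\{x\in R:\exists a\in A,\ x\le a\}$ with $A$ finite. An ideal of $P$ is a non-empty up-directed initial segment; $J(P)$ is the set of ideals of $P$ ordered by inclusion. An order-embedding $f$ satisfies $x\le y\iff f(x)\le f(y)$. *)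

(* Defs.v *)
From Stdlib Require List.
From mathcomp Require Import all_boot all_order.
Set Implicit Arguments. Unset Strict Implicit. Unset Printing Implicit Defensive.
Import Order.TTheory.
Local Open Scope order_scope.

Definition subset_of {T : Type} (A B : T -> Prop) := forall x, A x -> B x.

Section Defs.
Context {dR : Order.disp_t} (R : porderType dR).
Context {dP : Order.disp_t} (P : bJoinSemilatticeType dP).

Definition init_seg (A : R -> Prop) := forall x y : R, y <= x -> A x -> A y.

Record iseg := ISeg { iset :> R -> Prop; iset_init : init_seg iset }.

Definition fin_gen (A : R -> Prop) :=
  exists s : seq R, forall x, A x <-> exists2 a, a \in s & x <= a.
Record fgiseg := FGISeg { fgset :> R -> Prop; fgset_gen : fin_gen fgset }.

Definition is_ideal (J : P -> Prop) :=
  [/\ exists x, J x,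
      (forall x y : P, y <= x -> J x -> J y) &
      (forall x y, J x -> J y -> exists z, [/\ J z, x <= z & y <= z])].
Record ideal := Ideal { idset :> P -> Prop; idset_ideal : is_ideal idset }.

Definition order_embedding (f : iseg -> ideal) :=
  forall A B : iseg, subset_of (f A) (f B) <-> subset_of A B.

(* f preserves arbitrary joins: for every family S of initial segments,
   the image of its join (= union) is the least upper bound in J(P)
   (under inclusion) of the images of the members of S. *)
Definition preserves_joins (f : iseg -> ideal) :=
  forall (S : iseg -> Prop) (U : iseg),
    (forall x, U x <-> exists2 A : iseg, S A & A x) ->
    (forall A, S A -> subset_of (f A) (f U)) /\
    (forall J : ideal, (forall A, S A -> subset_of (f A) J) -> subset_of (f U) J).

Definition cond_iii (g : fgiseg -> P) :=
  forall (X : fgiseg) (Ys : seq fgiseg),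
    ~ (subset_of X (fun x => exists2 Y : fgiseg, List.In Y Ys & Y x)) ->
    ~ (g X <= \join_(Y <- Ys) g Y).

Definition cond_iv (h : R -> P) :=
  forall (x : R) (ys : seq R),
    (forall y, y \in ys -> ~~ (x <= y)) ->
    ~ (h x <= \join_(y <- ys) h y).
End Defs.

(* Main.v *)
Require Import Defs.
From mathcomp Require Import all_boot all_order.
From Stdlib Require Import Classical ClassicalEpsilon.
From Stdlib Require List.
Local Open Scope order_scope.
Import Order.TTheory.

Section Aux.
Context {dP : Order.disp_t} (P : bJoinSemilatticeType dP).

Lemma join_le_In (I : Type) (s : seq I) (F : I -> P) (x : P) :
  (forall i, List.In i s -> F i <= x) -> \join_(i <- s) F i <= x.
Proof.
elim: s => [|a s IH] H; first by rewrite big_nil le0x.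
rewrite big_cons leUx; apply/andP; split.
  by apply: H; left.
by apply: IH => i Hi; apply: H; right.
Qed.

Lemma le_join_In (I : Type) (s : seq I) (F : I -> P) (i : I) :
  List.In i s -> F i <= \join_(j <- s) F j.
Proof.
elim: s => [|a s IH] //= [->|Hi]; rewrite big_cons; first exact: leUl.
apply: le_trans (IH Hi) _; exact: leUr.
Qed.

Lemma join_sub (I : Type) (s t : seq I) (F : I -> P) :
  (forall i, List.In i s -> List.In i t) -> \join_(i <- s) F i <= \join_(i <- t) F i.
Proof. move=> H; apply: join_le_In => i Hi; apply: le_join_In; exact: H. Qed.

Lemma ideal_join (J : ideal P) (I : Type) (s : seq I) (F : I -> P) :
  (forall i, List.In i s -> J (F i)) -> J (\join_(i <- s) F i).
Proof.
case: J => J [[x0 Jx0] Jdown Jdir] /=.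
elim: s => [|a s IH] H; rewrite ?big_nil ?big_cons.
  exact: (Jdown x0 _ (le0x _) Jx0).
have Ja := H a (or_introl erefl).
have Js := IH (fun i Hi => H i (or_intror Hi)).
have [z [Jz az sz]] := Jdir _ _ Ja Js.
apply: (Jdown z) => //. by rewrite leUx az sz.
Qed.
End Aux.

Lemma In_mem (T : eqType) (x : T) (s : seq T) : x \in s <-> List.In x s.
Proof.
elim: s => [|a s IH] //=. rewrite in_cons -IH.
split => [/orP[/eqP->|H]|[->|H]]; [by left | by right | by rewrite eqxx | by rewrite H orbT].
Qed.

Lemma In_map (T U : Type) (f : T -> U) (s : seq T) y :
  List.In y (map f s) -> exists2 x, List.In x s & y = f x.
Proof.
elim: s => [|a s IH] //= [<-|H]; first by exists a; [left|].
by have [x Hx ->] := IH H; exists x; [right|].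
Qed.

Section Main.
Context {dR : Order.disp_t} (R : porderType dR).
Context {dP : Order.disp_t} (P : bJoinSemilatticeType dP).

Definition dn (x : R) : iseg R :=
  @ISeg _ R (fun y => y <= x) (fun a b ba ax => le_trans ba ax).
Definition Vx (x : R) : iseg R :=
  @ISeg _ R (fun y => ~ x <= y) (fun a b ba nxa xb => nxa (le_trans xb ba)).
Definition Zs (ys : seq R) : iseg R :=
  @ISeg _ R (fun y => exists2 b, List.In b ys & y <= b)
    (fun a b ba H => let: ex_intro2 c Hc ac := H in ex_intro2 _ _ c Hc (le_trans ba ac)).

Lemma fdn_gen (x : R) : fin_gen (fun y => y <= x).
Proof.
exists [:: x] => y; split => [H|[a]]; first by exists x => //; rewrite mem_seq1.
by rewrite mem_seq1 => /eqP ->.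
Qed.
Definition fdn (x : R) : fgiseg R := @FGISeg _ R (fun y => y <= x) (fdn_gen x).

Lemma ii_iv : (exists f : iseg R -> ideal P, order_embedding f) ->
  exists h : R -> P, cond_iv h.
Proof.
move=> [f Hf].
have ex : forall x, exists p, f (dn x) p /\ ~ f (Vx x) p.
  move=> x; apply: NNPP => Hn.
  have sub : subset_of (f (dn x)) (f (Vx x)).
    move=> p Hp; apply: NNPP => Hq; apply: Hn; by exists p.
  have := (Hf _ _).1 sub x (lexx x). by apply; apply: lexx.
have [h Hh] : exists h : R -> P, forall x, f (dn x) (h x) /\ ~ f (Vx x) (h x).
  exists (fun x => proj1_sig (constructive_indefinite_description _ (ex x))).
  move=> x; exact: proj2_sig (constructive_indefinite_description _ (ex x)).
exists h => x ys Hys Hle.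
have HZ : f (Zs ys) (\join_(y <- ys) h y).
  apply: ideal_join => y Hy.
  have sub : subset_of (dn y) (Zs ys) := fun z zy => ex_intro2 _ _ y Hy zy.
  apply: ((Hf _ _).2 sub). exact: (Hh y).1.
have Hx : f (Zs ys) (h x).
  case: (@idset_ideal _ _ (f (Zs ys))) => _ Hd _. exact: Hd _ _ Hle HZ.
have sub : subset_of (Zs ys) (Vx x).
  move=> z [b Hb zb] xz. have := Hys b ((In_mem _ _ _).2 Hb).
  move/negP; apply; exact: le_trans xz zb.
exact: (Hh x).2 ((Hf _ _).2 sub _ Hx).
Qed.

Lemma iii_iv : (exists g : fgiseg R -> P, cond_iii g) ->
  exists h : R -> P, cond_iv h.
Proof.
move=> [g Hg]; exists (fun x => g (fdn x)) => x ys Hys Hle.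
apply: (Hg (fdn x) (map fdn ys)).
  move=> Hs; have [Y HY Yx] := Hs x (lexx x).
  have [b Hb Yb] := @In_map _ _ _ _ _ HY; subst Y.
  have := Hys b ((In_mem _ _ _).2 Hb). by rewrite Yx.
by rewrite big_map.
Qed.

Lemma iv_iii : (exists h : R -> P, cond_iv h) ->
  exists g : fgiseg R -> P, cond_iii g.
Proof.
move=> [h Hh].
have [gen Hgen] : exists gen : fgiseg R -> seq R,
    forall (X : fgiseg R) x, X x <-> exists2 a, a \in gen X & x <= a.
  exists (fun X => proj1_sig (constructive_indefinite_description _ (fgset_gen X))).
  move=> X; exact: proj2_sig (constructive_indefinite_description _ (fgset_gen X)).
exists (fun X => \join_(a <- gen X) h a).
move=> X Ys Hns Hle.
have [x [Xx Hx]] : exists x, X x /\ ~ exists2 Y, List.In Y Ys & Y x.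
  apply: NNPP => Hn; apply: Hns => x Xx; apply: NNPP => Hy; apply: Hn; by exists x.
have [a Ha xa] := (Hgen X x).1 Xx.
apply: (Hh a (List.flat_map gen Ys)).
  move=> b /In_mem /List.in_flat_map [Y [HY Hb]]. apply/negP => ab. apply: Hx.
  exists Y => //. apply/(Hgen Y x). exists b; [exact/In_mem | exact: le_trans xa ab].
apply: le_trans (@le_join_In _ _ _ _ h _ ((In_mem _ _ _).1 Ha)) _.
apply: le_trans Hle _. apply: join_le_In => Y HY. apply: join_le_In => b Hb.
apply: le_join_In. apply/List.in_flat_map; by exists Y.
Qed.

Section IV_I.
Variable h : R -> P.
Hypothesis Hh : cond_iv h.

Lemma fI_ideal (A : R -> Prop) : is_ideal (fun p : P =>
  exists s : seq R, (forall a, List.In a s -> A a) /\ p <= \join_(a <- s) h a).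
Proof.
split.
- exists \bot, [::]; split => //; by rewrite big_nil.
- move=> p q qp [s [Hs ps]]; exists s; split => //; exact: le_trans qp ps.
- move=> p q [s [Hs ps]] [t [Ht qt]]. exists (\join_(a <- List.app s t) h a); split.
  + exists (List.app s t); split => //. move=> a Ha; case: (List.in_app_or _ _ _ Ha); auto.
  + apply: le_trans ps _; apply: join_sub => i Hi; apply: List.in_or_app; by left.
  + apply: le_trans qt _; apply: join_sub => i Hi; apply: List.in_or_app; by right.
Qed.

Definition fI (A : iseg R) : ideal P := Ideal (fI_ideal A).

Lemma iv_i_aux : order_embedding fI /\ preserves_joins fI.
Proof.
split.
  move=> A B; split => [H x Ax | H p [s [Hs ps]]].
    have hA : fI A (h x).
      simpl. exists [:: x]; split.
        by move=> a [Ha|[]]; rewrite -Ha.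
      by apply: le_join_In; left.
    have [t [Ht hxt]] := H _ hA.
    have : exists2 y, y \in t & x <= y.
      apply: NNPP => Hn. apply: (Hh x t _ hxt) => y yt. apply/negP => xy.
      apply: Hn; by exists y.
    move=> [y yt xy]. exact: (@iset_init _ _ B y x xy (Ht y ((In_mem _ _ _).1 yt))).
  exists s; split => //. move=> a /Hs; exact: H.
move=> S U HU; split.
  move=> A SA p [s [Hs ps]]; exists s; split => // a /Hs Aa; apply/HU; by exists A.
move=> J HJ p [s [Hs ps]].
case: (@idset_ideal _ _ J) => _ Jd _. apply: Jd ps _. apply: ideal_join => a /Hs /HU [A SA Aa].
apply: (HJ A SA). simpl. exists [:: a]; split.
  by move=> b [Hb|[]]; rewrite -Hb.
by apply: le_join_In; left.
Qed.
End IV_I.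

Lemma iv_i : (exists h : R -> P, cond_iv h) ->
  exists f : iseg R -> ideal P, order_embedding f /\ preserves_joins f.
Proof. move=> [h Hh]; exists (fI h); exact: iv_i_aux. Qed.
End Main.

Theorem lemma1p2 (dR : Order.disp_t) (R : porderType dR)
  (dP : Order.disp_t) (P : bJoinSemilatticeType dP) :
  [/\ ((exists f : iseg R -> ideal P, order_embedding f /\ preserves_joins f)
        <-> (exists f : iseg R -> ideal P, order_embedding f)),
      ((exists f : iseg R -> ideal P, order_embedding f)
        <-> (exists g : fgiseg R -> P, cond_iii g)) &
      ((exists g : fgiseg R -> P, cond_iii g)
        <-> (exists h : R -> P, cond_iv h))].
Proof.
split; split.
- by move=> [f [Hf _]]; exists f.
- by move=> /ii_iv /iv_i.
- by move=> /ii_iv /iv_iii.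
- move=> /iii_iv /iv_i [f [Hf _]]; by exists f.
- exact: iii_iv.
- exact: iv_iii.
Qed.
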